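(* For $n\in\{0,1,2\}$ and a monoid $S$ the following are equivalent: (i) $S$ is $n$-supernilpotent; (ii) $S$ is left and right $n$-nilpotent; (iii) $S$ embeds into an $n$-nilpotent group.
   Context: Monoids are regarded as semigroups $(S,\cdot)$. For congruences $\alpha_1,\dots,\alpha_k$, $M(\alpha_1,\dots,\alpha_k)$ is the subsemigroup of $S^{\{0,1\}^k}$ generated by all $g$ such that for some $i$ and $(a,b)\in\alpha_i$, $g(x)=a$ if $x_i=0$ and $g(x)=b$ if $x_i=1$; $[\alpha_1,\dots,\alpha_k]$ is the smallest congruence $\delta$ such that for all $f\in M(\alpha_1,\dots,\alpha_k)$: if $(f(x0),f(x1))\in\delta$ for all $x\in\{0,1\}^{k-1}\setminus\{(1,\dots,1)\}$ then $(f(1,\dots,1,0),f(1,\dots,1,1))\in\delta$. With $1$ total, $0$ trivial congruence: $(1]^1=1$, $(1]^{j+1}=[1,(1]^j]$; $[1)^1=1$, $[1)^{j+1}=[[1)^j,1]$. Left $n$-nilpotent: $(1]^{n+1}=0$; right $n$-nilpotent: $[1)^{n+1}=0$; $n$-supernilpotent: the $(n+1)$-ary $[1,\dots,1]=0$. An $n$-nilpotent group has nilpotency class at most $n$. *)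

(* Defs.v *)
From mathcomp Require Import all_boot.

Set Implicit Arguments.
Unset Strict Implicit.
Unset Printing Implicit Defensive.

(* Monoids are regarded as semigroups (S, mul).  Relations are S -> S -> Prop. *)

Definition is_congr (S : Type) (mul : S -> S -> S) (r : S -> S -> Prop) : Prop :=
  [/\ (forall a, r a a),
      (forall a b, r a b -> r b a),
      (forall a b c, r a b -> r b c -> r a c) &
      (forall a b c d, r a b -> r c d -> r (mul a c) (mul b d))].

Definition total_rel (S : Type) : S -> S -> Prop := fun _ _ => True.

Definition is_trivial (S : Type) (r : S -> S -> Prop) : Prop :=
  forall a b, r a b -> a = b.

(* M(alpha_1, ..., alpha_k) for k = m.+1, as a predicate on maps
   {0,1}^k -> S, points of {0,1}^k being maps 'I_k -> bool. *)
Inductive Mgen (S : Type) (mul : S -> S -> S) (m : nat)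
    (alpha : 'I_m.+1 -> S -> S -> Prop) : (('I_m.+1 -> bool) -> S) -> Prop :=
  | Mgen_gen (i : 'I_m.+1) (a b : S) :
      alpha i a b -> Mgen mul alpha (fun x => if x i then b else a)
  | Mgen_mul (f g : ('I_m.+1 -> bool) -> S) :
      Mgen mul alpha f -> Mgen mul alpha g -> Mgen mul alpha (fun x => mul (f x) (g x)).

(* x b : the point of {0,1}^(m+1) obtained by appending b to x in {0,1}^m. *)
Definition ext_pt (m : nat) (x : 'I_m -> bool) (b : bool) : 'I_m.+1 -> bool :=
  fun i => if unlift ord_max i is Some j then x j else b.

Definition term_cond (S : Type) (mul : S -> S -> S) (m : nat)
    (alpha : 'I_m.+1 -> S -> S -> Prop) (delta : S -> S -> Prop) : Prop :=
  forall f, Mgen mul alpha f ->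
    (forall x : 'I_m -> bool, ~ (forall j, x j = true) ->
       delta (f (ext_pt x false)) (f (ext_pt x true))) ->
    delta (f (ext_pt (fun _ => true) false)) (f (ext_pt (fun _ => true) true)).

Definition commutator (S : Type) (mul : S -> S -> S) (m : nat)
    (alpha : 'I_m.+1 -> S -> S -> Prop) : S -> S -> Prop :=
  fun a b => forall delta, is_congr mul delta -> term_cond mul alpha delta -> delta a b.

Definition comm2 (S : Type) (mul : S -> S -> S) (a b : S -> S -> Prop) : S -> S -> Prop :=
  commutator mul (fun i : 'I_2 => if val i == 0 then a else b).

(* lpow j = (1]^(j+1),  rpow j = [1)^(j+1). *)
Fixpoint lpow (S : Type) (mul : S -> S -> S) (j : nat) : S -> S -> Prop :=
  match j with
  | 0 => @total_rel S
  | j'.+1 => comm2 mul (@total_rel S) (lpow mul j')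
  end.

Fixpoint rpow (S : Type) (mul : S -> S -> S) (j : nat) : S -> S -> Prop :=
  match j with
  | 0 => @total_rel S
  | j'.+1 => comm2 mul (rpow mul j') (@total_rel S)
  end.

Definition left_nilpotent (S : Type) (mul : S -> S -> S) (n : nat) : Prop :=
  is_trivial (lpow mul n).

Definition right_nilpotent (S : Type) (mul : S -> S -> S) (n : nat) : Prop :=
  is_trivial (rpow mul n).

Definition supernilpotent (S : Type) (mul : S -> S -> S) (n : nat) : Prop :=
  is_trivial (commutator mul (fun _ : 'I_n.+1 => @total_rel S)).

Definition is_group (G : Type) (gmul : G -> G -> G) (ginv : G -> G) (ge : G) : Prop :=
  [/\ associative gmul, left_id ge gmul, right_id ge gmul,
      (forall x, gmul (ginv x) x = ge) & (forall x, gmul x (ginv x) = ge)].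

Inductive subgrp_gen (G : Type) (gmul : G -> G -> G) (ginv : G -> G) (ge : G)
    (A : G -> Prop) : G -> Prop :=
  | sg_base x : A x -> subgrp_gen gmul ginv ge A x
  | sg_one : subgrp_gen gmul ginv ge A ge
  | sg_mul x y : subgrp_gen gmul ginv ge A x -> subgrp_gen gmul ginv ge A y ->
      subgrp_gen gmul ginv ge A (gmul x y)
  | sg_inv x : subgrp_gen gmul ginv ge A x -> subgrp_gen gmul ginv ge A (ginv x).

Definition gcomm (G : Type) (gmul : G -> G -> G) (ginv : G -> G) (x y : G) : G :=
  gmul (gmul (ginv x) (ginv y)) (gmul x y).

(* lcs i = gamma_(i+1): gamma_1 = G, gamma_(i+1) = [gamma_i, G]. *)
Fixpoint lcs (G : Type) (gmul : G -> G -> G) (ginv : G -> G) (ge : G) (i : nat)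
    : G -> Prop :=
  match i with
  | 0 => fun _ => True
  | i'.+1 => subgrp_gen gmul ginv ge
               (fun z => exists x y, lcs gmul ginv ge i' x /\ z = gcomm gmul ginv x y)
  end.

Definition nilpotent_group (G : Type) (gmul : G -> G -> G) (ginv : G -> G) (ge : G)
    (n : nat) : Prop :=
  forall x, lcs gmul ginv ge n x -> x = ge.

Definition embeds_into_nilpotent_group (S : Type) (mul : S -> S -> S) (n : nat) : Prop :=
  exists (G : Type) (gmul : G -> G -> G) (ginv : G -> G) (ge : G),
    [/\ is_group gmul ginv ge, nilpotent_group gmul ginv ge n &
        exists h : S -> G, injective h /\ forall a b, h (mul a b) = gmul (h a) (h b)].

(* Main.v *)
Require Import Defs.
From mathcomp Require Import all_boot.
From Stdlib Require Import FunctionalExtensionality PropExtensionality ProofIrrelevance IndefiniteDescription.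

Set Implicit Arguments.
Unset Strict Implicit.
Unset Printing Implicit Defensive.


Section Basic.
Variables (S : Type) (mul : S -> S -> S).

Lemma comm_congr m (alpha : 'I_m.+1 -> S -> S -> Prop) :
  is_congr mul (commutator mul alpha).
Proof.
split.
- by move=> a d [Hr _ _ _] _; apply: Hr.
- move=> a b H d Hd Ht; case: (Hd) => _ Hs _ _; apply: Hs; exact: H.
- move=> a b c H1 H2 d Hd Ht; case: (Hd) => _ _ Htr _; apply: Htr (H1 d Hd Ht) (H2 d Hd Ht).
- move=> a b c d H1 H2 dl Hd Ht; case: (Hd) => _ _ _ Hc; exact: Hc (H1 dl Hd Ht) (H2 dl Hd Ht).
Qed.

Lemma comm_tc m (alpha : 'I_m.+1 -> S -> S -> Prop) :
  term_cond mul alpha (commutator mul alpha).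
Proof.
move=> f Hf H d Hd Ht; apply: (Ht f Hf) => x Hx; exact: H x Hx d Hd Ht.
Qed.

Lemma comm_min m (alpha : 'I_m.+1 -> S -> S -> Prop) (d : S -> S -> Prop) :
  is_congr mul d -> term_cond mul alpha d -> forall a b, commutator mul alpha a b -> d a b.
Proof. by move=> Hd Ht a b H; apply: H. Qed.

Hypothesis mulA : associative mul.

Lemma eq_congr : is_congr mul (@eq S).
Proof. split => //; [by move=> ? ? ? -> | by move=> ? ? ? ? -> ->]. Qed.

Lemma triv_tc m (alpha : 'I_m.+1 -> S -> S -> Prop) :
  is_trivial (commutator mul alpha) <-> term_cond mul alpha (@eq S).
Proof.
split.
- move=> Htr f Hf H; apply: Htr; apply: comm_tc => // x Hx.
  rewrite (H x Hx); case: (comm_congr alpha) => Hr _ _ _; exact: Hr.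
- move=> Ht a b; exact: comm_min eq_congr Ht a b.
Qed.

Lemma Mgen_ext m (alpha beta : 'I_m.+1 -> S -> S -> Prop) f :
  (forall i a b, alpha i a b -> beta i a b) -> Mgen mul alpha f -> Mgen mul beta f.
Proof.
move=> H; elim=> [i a b Hab|g k _ Hg _ Hk]; first by apply: Mgen_gen; apply: H.
exact: Mgen_mul.
Qed.

Lemma tc_ext m (alpha beta : 'I_m.+1 -> S -> S -> Prop) d :
  (forall i a b, alpha i a b <-> beta i a b) -> term_cond mul alpha d -> term_cond mul beta d.
Proof.
move=> H Ht f Hf; apply: Ht; apply: Mgen_ext Hf => i a b; case: (H i a b) => _; exact.
Qed.
End Basic.

Definition P2 (b0 b1 : bool) : 'I_2 -> bool := ext_pt (fun _ : 'I_1 => b0) b1.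
Definition i0 : 'I_2 := ord0.
Definition i1 : 'I_2 := ord_max.

Lemma ext_pt_max m (x : 'I_m -> bool) b : ext_pt x b ord_max = b.
Proof. by rewrite /ext_pt unlift_none. Qed.

Lemma ext_pt_lt m (x : 'I_m -> bool) b (i : 'I_m.+1) (H : val i < m) :
  ext_pt x b i = x (Ordinal H).
Proof.
rewrite /ext_pt; case: unliftP => [j Ej|Ei].
  congr x; apply: val_inj; rewrite /= Ej /=.
  by case: j {Ej} => j Hj; rewrite /= /bump leqNgt Hj.
by exfalso; move: (H); rewrite Ei /= ltnn.
Qed.

Lemma P2_0 b0 b1 : P2 b0 b1 i0 = b0.
Proof. by rewrite /P2 (ext_pt_lt _ _ (isT : val i0 < 1)). Qed.
Lemma P2_1 b0 b1 : P2 b0 b1 i1 = b1.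
Proof. exact: ext_pt_max. Qed.

Lemma I2_cases (i : 'I_2) : i = i0 \/ i = i1.
Proof. case: i => [[|[|//]]] Hi; [left|right]; exact: val_inj. Qed.

Definition Q3 (b0 b1 b2 : bool) : 'I_3 -> bool :=
  ext_pt (fun j : 'I_2 => if val j == 0 then b0 else b1) b2.
Definition j0 : 'I_3 := ord0.
Definition j1 : 'I_3 := Ordinal (isT : 1 < 3).
Definition j2 : 'I_3 := ord_max.

Lemma Q3_0 b0 b1 b2 : Q3 b0 b1 b2 j0 = b0.
Proof. by rewrite /Q3 (ext_pt_lt _ _ (isT : val j0 < 2)). Qed.
Lemma Q3_1 b0 b1 b2 : Q3 b0 b1 b2 j1 = b1.
Proof. by rewrite /Q3 (ext_pt_lt _ _ (isT : val j1 < 2)). Qed.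
Lemma Q3_2 b0 b1 b2 : Q3 b0 b1 b2 j2 = b2.
Proof. exact: ext_pt_max. Qed.

Lemma I3_cases (i : 'I_3) : [\/ i = j0, i = j1 | i = j2].
Proof. case: i => [[|[|[|//]]]] Hi; [apply: Or31|apply: Or32|apply: Or33]; exact: val_inj. Qed.

Section TCforms.
Variables (S : Type) (mul : S -> S -> S).

Lemma bin_tc_elim (alpha : 'I_2 -> S -> S -> Prop) d :
  term_cond mul alpha d -> forall f, Mgen mul alpha f ->
  d (f (P2 false false)) (f (P2 false true)) -> d (f (P2 true false)) (f (P2 true true)).
Proof.
move=> Ht f Hf H; apply: Ht => // x Hx.
have -> : x = fun _ => false.
  apply: functional_extensionality => j; rewrite (ord1 j).
  case E: (x ord0) => //; case: Hx => k; by rewrite (ord1 k).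
exact: H.
Qed.

Lemma bin_tc_intro (alpha : 'I_2 -> S -> S -> Prop) d :
  (forall f, Mgen mul alpha f ->
    d (f (P2 false false)) (f (P2 false true)) -> d (f (P2 true false)) (f (P2 true true))) ->
  term_cond mul alpha d.
Proof.
move=> H f Hf Hx; apply: H => //; apply: Hx => Hall; by have := Hall ord0.
Qed.

Lemma I2_fun (x : 'I_2 -> bool) : x = fun j => if val j == 0 then x ord0 else x ord_max.
Proof.
apply: functional_extensionality => j; case: (I2_cases j) => ->; reflexivity.
Qed.

Lemma Q3_true b : ext_pt (fun _ : 'I_2 => true) b = Q3 true true b.
Proof. by rewrite /Q3; congr ext_pt; apply: functional_extensionality => j; case: ifP. Qed.

Lemma tern_tc_elim (alpha : 'I_3 -> S -> S -> Prop) d :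
  term_cond mul alpha d -> forall f, Mgen mul alpha f ->
  d (f (Q3 false false false)) (f (Q3 false false true)) ->
  d (f (Q3 true false false)) (f (Q3 true false true)) ->
  d (f (Q3 false true false)) (f (Q3 false true true)) ->
  d (f (Q3 true true false)) (f (Q3 true true true)).
Proof.
move=> Ht f Hf H00 H10 H01; rewrite -!Q3_true; apply: Ht => // x Hx.
rewrite (I2_fun x); rewrite -/(Q3 (x ord0) (x ord_max) false) -/(Q3 (x ord0) (x ord_max) true).
case E0: (x ord0); case E1: (x ord_max) => //.
case: Hx => j; case: (I2_cases j) => -> //.
Qed.

Lemma tern_tc_intro (alpha : 'I_3 -> S -> S -> Prop) d :
  (forall f, Mgen mul alpha f ->
  d (f (Q3 false false false)) (f (Q3 false false true)) ->
  d (f (Q3 true false false)) (f (Q3 true false true)) ->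
  d (f (Q3 false true false)) (f (Q3 false true true)) ->
  d (f (Q3 true true false)) (f (Q3 true true true))) ->
  term_cond mul alpha d.
Proof.
move=> H f Hf Hx; rewrite !Q3_true; apply: H => //.
- apply: (Hx (fun j : 'I_2 => if val j == 0 then false else false)).
  by move=> Hall; have := Hall ord0.
- apply: (Hx (fun j : 'I_2 => if val j == 0 then true else false)).
  by move=> Hall; have := Hall ord_max.
- apply: (Hx (fun j : 'I_2 => if val j == 0 then false else true)).
  by move=> Hall; have := Hall ord0.
Qed.
End TCforms.


Ltac mgen := repeat (first [apply: Mgen_mul | apply: Mgen_gen]); try done.

Section MonDeriv.
Variables (S : Type) (mul : S -> S -> S) (e : S).
Hypotheses (mulA : associative mul) (mul1s : left_id e mul) (muls1 : right_id e mul).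
Local Infix "**" := mul (at level 40, left associativity).

Definition total := @total_rel S.
Definition gam := comm2 mul total total.

Ltac ev2 := rewrite /= ?P2_0 ?P2_1 /= ?mul1s ?muls1 ?mulA.
Ltac ev3 := rewrite /= ?Q3_0 ?Q3_1 ?Q3_2 /= ?mul1s ?muls1 ?mulA.

Section N1.
Hypothesis T : term_cond mul (fun _ : 'I_2 => total) (@eq S).

Lemma T1_lcancel a c d : a ** c = a ** d -> c = d.
Proof.
move=> H.
have := bin_tc_elim T (f := fun x => (if x i0 then e else a) ** (if x i1 then d else c)).
ev2; apply; [mgen | done].
Qed.

Lemma T1_rcancel a c d : c ** a = d ** a -> c = d.
Proof.
move=> H.
have := bin_tc_elim T (f := fun x => (if x i1 then d else c) ** (if x i0 then e else a)).
ev2; apply; [mgen | done].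
Qed.

Lemma T1_comm x y : x ** y = y ** x.
Proof.
have := bin_tc_elim T (f := fun z => (if z i1 then x else e) ** (if z i0 then y else e)
   ** (if z i1 then e else x)).
ev2; move=> H; symmetry; apply: H; [mgen | done].
Qed.
End N1.

Section N2tern.
Hypothesis T : term_cond mul (fun _ : 'I_3 => total) (@eq S).

Lemma T3_lcancel a c d : a ** c = a ** d -> c = d.
Proof.
move=> H.
have := tern_tc_elim T (f := fun x => (if x j0 then e else a) ** (if x j1 then e else a)
   ** (if x j2 then d else c)).
ev3; apply; try mgen; rewrite -?mulA ?H //.
Qed.

Lemma T3_rcancel a c d : c ** a = d ** a -> c = d.
Proof.
move=> H.
have := tern_tc_elim T (f := fun x => (if x j2 then d else c) ** (if x j0 then e else a)
   ** (if x j1 then e else a)).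
ev3; apply; try mgen; rewrite ?H //.
Qed.

Lemma T3_J1 a b w : a ** b ** w ** a ** a ** b ** a = b ** a ** w ** a ** a ** a ** b.
Proof.
pose c := a ** a ** b ** a.
have := tern_tc_elim T (f := fun x => (if x j2 then e else c ** w) **
   ((if x j0 then a else e) ** (if x j1 then a ** a ** b else a) ** (if x j0 then e else a)
     ** (if x j1 then e else b ** a)) ** (if x j2 then w else w) ** (if x j2 then c ** w else e)).
rewrite /c; ev3 => H.
have {}H : a ** a ** b ** a ** w ** a ** a ** a ** b ** w = a ** a ** a ** b ** w ** a ** a ** b ** a ** w.
  by apply: H; try mgen.
move/T3_rcancel: H; rewrite -!mulA => /T3_lcancel /T3_lcancel; rewrite !mulA => H.
by rewrite H.
Qed.
End N2tern.

Lemma gam_congr : is_congr mul gam.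
Proof. exact: comm_congr. Qed.

Lemma gam_refl a : gam a a.
Proof. by case: gam_congr => H _ _ _; apply: H. Qed.
Lemma gam_sym a b : gam a b -> gam b a.
Proof. by case: gam_congr => _ H _ _; apply: H. Qed.

Lemma gam_tc : term_cond mul (fun i : 'I_2 => if val i == 0 then total else total) gam.
Proof. exact: comm_tc. Qed.

Lemma gam_lc a c d : a ** c = a ** d -> gam c d.
Proof.
move=> H.
have := bin_tc_elim gam_tc (f := fun x => (if x i0 then e else a) ** (if x i1 then d else c)).
ev2; apply; [mgen | rewrite H; exact: gam_refl].
Qed.

Lemma gam_rc a c d : c ** a = d ** a -> gam c d.
Proof.
move=> H.
have := bin_tc_elim gam_tc (f := fun x => (if x i1 then d else c) ** (if x i0 then e else a)).
ev2; apply; [mgen | rewrite H; exact: gam_refl].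
Qed.

Lemma gam_swap x y : gam (x ** y) (y ** x).
Proof.
have := bin_tc_elim gam_tc (f := fun z => (if z i1 then x else e) ** (if z i0 then y else e)
   ** (if z i1 then e else x)).
ev2 => H; apply: gam_sym; apply: H; [mgen | exact: gam_refl].
Qed.

Section N2lr.
Hypothesis TL : term_cond mul (fun i : 'I_2 => if val i == 0 then total else gam) (@eq S).
Hypothesis TR : term_cond mul (fun i : 'I_2 => if val i == 0 then gam else total) (@eq S).

Lemma TL_lcancel a c d : a ** c = a ** d -> c = d.
Proof.
move=> H; have G := gam_lc H.
have := bin_tc_elim TL (f := fun x => (if x i0 then e else a) ** (if x i1 then d else c)).
ev2; apply; [mgen | done].
Qed.

Lemma TL_rcancel a c d : c ** a = d ** a -> c = d.
Proof.
move=> H; have G := gam_rc H.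
have := bin_tc_elim TL (f := fun x => (if x i1 then d else c) ** (if x i0 then e else a)).
ev2; apply; [mgen | done].
Qed.

Lemma TR_malcev x y w : x ** y ** w ** y ** x = y ** x ** w ** x ** y.
Proof.
have G := gam_swap x y.
pose c := x ** y.
have := bin_tc_elim TR (f := fun z => (if z i1 then e else c ** w) ** (if z i0 then y ** x else c)
   ** (if z i1 then w else w) ** (if z i1 then c ** w else e)).
rewrite /c; ev2 => H.
have {}H : x ** y ** w ** y ** x ** w = y ** x ** w ** x ** y ** w.
  by apply: H; mgen.
by move/TL_rcancel: H.
Qed.

Lemma TR_J1 a b w : a ** b ** w ** a ** a ** b ** a = b ** a ** w ** a ** a ** a ** b.
Proof. have := TR_malcev a b (w ** a ** a); by rewrite !mulA. Qed.
End N2lr.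
End MonDeriv.


Section Grp.
Variables (G : Type) (gmul : G -> G -> G) (ginv : G -> G) (ge : G).
Hypothesis Hg : is_group gmul ginv ge.
Local Infix "*" := gmul.
Local Notation "x ^-1" := (ginv x).
Local Notation "1" := ge.

Lemma gA : associative gmul. Proof. by case: Hg. Qed.
Lemma g1m : left_id ge gmul. Proof. by case: Hg. Qed.
Lemma gm1 : right_id ge gmul. Proof. by case: Hg. Qed.
Lemma gVm x : x^-1 * x = 1. Proof. by case: Hg => _ _ _ H _. Qed.
Lemma gmV x : x * x^-1 = 1. Proof. by case: Hg => _ _ _ _ H. Qed.

Lemma gKV x y : x^-1 * (x * y) = y. Proof. by rewrite gA gVm g1m. Qed.
Lemma gVK x y : x * (x^-1 * y) = y. Proof. by rewrite gA gmV g1m. Qed.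

Lemma gcanl x y z : x * y = x * z -> y = z.
Proof. by move=> H; rewrite -(gKV x y) H gKV. Qed.
Lemma gcanr x y z : y * x = z * x -> y = z.
Proof. by move=> H; rewrite -(gm1 y) -(gmV x) gA H -gA gmV gm1. Qed.

Lemma ginv_uniq x y : x * y = 1 -> y = x^-1.
Proof. by move=> H; apply: (@gcanl x); rewrite H gmV. Qed.
Lemma ginvK x : (x^-1)^-1 = x.
Proof. by symmetry; apply: ginv_uniq; rewrite gVm. Qed.
Lemma ginvM x y : (x * y)^-1 = y^-1 * x^-1.
Proof. by symmetry; apply: ginv_uniq; rewrite -gA gVK gmV. Qed.
Lemma ginv1 : 1^-1 = 1.
Proof. by symmetry; apply: ginv_uniq; rewrite gm1. Qed.

Definition central (z : G) := forall y, z * y = y * z.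

Lemma central1 : central 1. Proof. by move=> y; rewrite g1m gm1. Qed.
Lemma centralM x y : central x -> central y -> central (x * y).
Proof. by move=> Hx Hy z; rewrite -gA Hy gA Hx gA. Qed.
Lemma centralV x : central x -> central (x^-1).
Proof.
move=> Hx z; apply: (@gcanl x); by rewrite gVK gA Hx -gA gmV gm1.
Qed.

Definition gc := locked (gcomm gmul ginv).

Lemma gcommE x y : gcomm gmul ginv x y = gc x y.
Proof. by rewrite /gc -lock. Qed.

Lemma gcE x y : gc x y = x^-1 * (y^-1 * (x * y)).
Proof. by rewrite /gc -lock /gcomm -gA. Qed.

Lemma gc_swap x y : x * y = y * x * gc x y.
Proof. by rewrite gcE -!gA gVK gVK. Qed.

Lemma gc_sym x y : gc y x = (gc x y)^-1.
Proof.
apply: ginv_uniq; rewrite !gcE -!gA.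
by rewrite !gVK gKV gVm.
Qed.

Lemma gcM_l x z y : central (gc x y) -> gc (x * z) y = gc x y * gc z y.
Proof.
move=> Hx.
have E1 := gc_swap (x * z) y.
have E2 : x * z * y = y * (x * z) * (gc x y * gc z y).
  rewrite -!gA (gc_swap z y) -!gA gA (gc_swap x y) -!gA.
  congr (_ * (_ * _)); by rewrite gA Hx -gA.
by move: E2; rewrite E1 -!gA => /gcanl/gcanl/gcanl.
Qed.

Lemma gcV_l x y : central (gc x y) -> gc (x^-1) y = (gc x y)^-1.
Proof.
move=> Hx; apply: ginv_uniq.
rewrite -gcM_l // gmV gcE ginv1 !g1m gVm //.
Qed.

Lemma gc_central1 x y : central x -> gc x y = 1.
Proof. by move=> Hx; rewrite gcE (Hx y) gKV gVm. Qed.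

Lemma gc_comm1 x y : x * y = y * x -> gc x y = 1.
Proof. by move=> H; rewrite gcE H gKV gVm. Qed.

Lemma central_of_gc1 k : (forall w, gc k w = 1) -> central k.
Proof. by move=> H w; rewrite gc_swap H gm1. Qed.

Lemma sg_triv (A : G -> Prop) : (forall z, A z -> z = 1) ->
  forall z, subgrp_gen gmul ginv ge A z -> z = 1.
Proof.
move=> HA z; elim => [x /HA //| // | x y _ -> _ -> | x _ ->]; by rewrite ?g1m ?ginv1.
Qed.

Lemma sg_central (A : G -> Prop) : (forall z, A z -> central z) ->
  forall z, subgrp_gen gmul ginv ge A z -> central z.
Proof.
move=> HA z; elim => [x /HA //| | x y _ Hx _ Hy | x _ Hx].
- exact: central1.
- exact: centralM.
- exact: centralV.
Qed.

Lemma nil2_central : nilpotent_group gmul ginv ge 2 -> forall x y, central (gc x y).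
Proof.
move=> Hn x y; apply: central_of_gc1 => w.
rewrite -gcommE; apply: Hn; apply: sg_base.
exists (gc x y), w; split => //; apply: sg_base; exists x, y; split => //.
by rewrite gcommE.
Qed.

Lemma central_nil2 : (forall x y, central (gc x y)) -> nilpotent_group gmul ginv ge 2.
Proof.
move=> Hc z; apply: sg_triv => w [x [y [Hx ->]]].
rewrite gcommE; apply: gc_central1.
apply: (sg_central _ Hx) => k [a [b [_ ->]]]; rewrite gcommE; exact: Hc.
Qed.

Lemma nil1_comm : nilpotent_group gmul ginv ge 1 -> forall x y, x * y = y * x.
Proof.
move=> Hn x y; rewrite gc_swap.
have -> : gc x y = 1 by rewrite -gcommE; apply: Hn; apply: sg_base; exists x, y.
by rewrite gm1.
Qed.

Lemma comm_nil1 : (forall x y, gc x y = 1) -> nilpotent_group gmul ginv ge 1.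
Proof.
move=> Hc z; apply: sg_triv => w [x [y [_ ->]]]; by rewrite gcommE Hc.
Qed.

Lemma gcM_r (H2 : forall x y, central (gc x y)) k x y : gc k (x * y) = gc k x * gc k y.
Proof.
rewrite gc_sym gcM_l // ginvM -!gc_sym; exact: H2.
Qed.

Lemma gc_centr_l v x y : central v -> gc (v * x) y = gc x y.
Proof. move=> Hv; rewrite gcM_l; last by rewrite gc_central1 //; exact: central1.
by rewrite gc_central1 // g1m. Qed.

Lemma commV k b : k * b = b * k -> k * b^-1 = b^-1 * k.
Proof.
move=> H; apply: (@gcanl b); by rewrite gVK gA -H -gA gmV gm1.
Qed.

Lemma J1_comm A B W : A*B*W*A*A*B*A = B*A*W*A*A*A*B -> A*B*A*A*B*A = B*A*A*A*A*B ->
  gc A B * W = W * gc A B.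
Proof.
move=> E1 E0; apply: (@gcanr (A*(A*(B*A)))).
move: E1 E0; rewrite -!gA => E1 E0.
rewrite gcE -!gA E1 gKV gKV.
rewrite E0 gKV gKV //.
Qed.

Variable Z : G -> Prop.
Hypotheses (Zc : forall z, Z z -> central z) (Z1 : Z 1)
  (ZM : forall x y, Z x -> Z y -> Z (x * y)) (ZV : forall x, Z x -> Z (x^-1)).
Variable T : G -> Prop.
Hypothesis HT : forall x y, T x -> T y -> Z (gc x y).
Hypothesis Tgen : forall g, exists a b, [/\ T a, T b & g = a * b^-1].

Lemma gc_left_closed y x1 x2 : Z (gc x1 y) -> Z (gc x2 y) -> Z (gc (x1 * x2^-1) y).
Proof.
move=> H1 H2; have H2' : Z (gc (x2^-1) y) by rewrite gcV_l; [apply: ZV | apply: Zc].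
rewrite gcM_l; [exact: ZM | exact: Zc].
Qed.

Lemma gc_allT g y : T y -> Z (gc g y).
Proof.
move=> Ty; case: (Tgen g) => a [b [Ta Tb ->]].
apply: gc_left_closed; exact: HT.
Qed.

Lemma gc_all g1 g2 : Z (gc g1 g2).
Proof.
case: (Tgen g2) => a [b [Ta Tb ->]].
rewrite gc_sym; apply: ZV.
apply: gc_left_closed; rewrite gc_sym; apply: ZV; exact: gc_allT.
Qed.
End Grp.


Section Frac.
Variables (S : Type) (mul : S -> S -> S) (e : S).
Hypotheses (mulA : associative mul) (mul1s : left_id e mul) (muls1 : right_id e mul).
Local Infix "**" := mul (at level 40, left associativity).
Hypothesis lcan : forall a c d, a ** c = a ** d -> c = d.
Hypothesis rcan : forall a c d, c ** a = d ** a -> c = d.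
Hypothesis J1 : forall a b w, a ** b ** w ** a ** a ** b ** a = b ** a ** w ** a ** a ** a ** b.

Definition ot b c := locked (c ** b ** b ** c ** b).
Definition os b c := locked (b ** b ** b ** b ** c).
Lemma ore_eq b c : b ** ot b c = c ** os b c.
Proof. rewrite /ot /os -!lock !mulA; have := J1 b c e; by rewrite !muls1. Qed.

Definition frel (p q : S * S) : Prop :=
  exists u v, p.1 ** u = q.1 ** v /\ p.2 ** u = q.2 ** v.

Lemma frel_refl p : frel p p.
Proof. by exists e, e. Qed.
Lemma frel_sym p q : frel p q -> frel q p.
Proof. by case=> u [v [H1 H2]]; exists v, u. Qed.
Lemma frel_trans p q r : frel p q -> frel q r -> frel p r.
Proof.
case=> u [v [H1 H2]] [u' [v' [H3 H4]]].
have E := ore_eq v u'.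
exists (u ** ot v u'), (v' ** os v u'); split.
- by rewrite mulA H1 -mulA E mulA H3 mulA.
- by rewrite mulA H2 -mulA E mulA H4 mulA.
Qed.
Lemma frel_scale a b r : frel (a ** r, b ** r) (a, b).
Proof. by exists e, r; rewrite !muls1. Qed.

Definition prod_rel (p q z : S * S) : Prop :=
  exists t s, p.2 ** t = q.1 ** s /\ z = (p.1 ** t, q.2 ** s).

Lemma prod_ex p q : exists z, prod_rel p q z.
Proof. by exists (p.1 ** ot p.2 q.1, q.2 ** os p.2 q.1), (ot p.2 q.1), (os p.2 q.1); rewrite ore_eq. Qed.

Lemma prodgen p q z z' : prod_rel p q z -> prod_rel p q z' -> frel z z'.
Proof.
case=> t [s [E ->]] [t' [s' [E' ->]]].
have F := ore_eq t t'.
exists (ot t t'), (os t t'); split; rewrite /= -!mulA ?F //.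
congr (_ ** _); apply: (@lcan q.1); rewrite !mulA -E -E' -!mulA F //.
Qed.

Lemma prod_scaleL a b u q z z' : prod_rel (a, b) q z -> prod_rel (a ** u, b ** u) q z' -> frel z z'.
Proof.
case=> t [s [E ->]] Hz'.
have F := ore_eq u t.
have H2 : prod_rel (a ** u, b ** u) q (a ** u ** ot u t, q.2 ** (s ** os u t)).
  exists (ot u t), (s ** os u t); split => //=.
  by rewrite -mulA F mulA E mulA.
apply: frel_sym; apply: frel_trans (prodgen Hz' H2) _.
by rewrite -mulA F mulA (mulA q.2); apply: frel_scale.
Qed.

Lemma prod_scaleR p c d u z z' : prod_rel p (c, d) z -> prod_rel p (c ** u, d ** u) z' -> frel z z'.
Proof.
case=> t [s [E ->]] Hz'.
have F := ore_eq s u.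
have H2 : prod_rel p (c ** u, d ** u) (p.1 ** (t ** ot s u), d ** u ** os s u).
  exists (t ** ot s u), (os s u); split => //=.
  by rewrite mulA E -mulA F mulA.
apply: frel_sym; apply: frel_trans (prodgen Hz' H2) _.
by rewrite /= -(mulA d) -F !mulA; apply: frel_scale.
Qed.

Lemma prod_wdL p p' q z z' : frel p p' -> prod_rel p q z -> prod_rel p' q z' -> frel z z'.
Proof.
case: p p' => a b [a' b'] [u [v [/= H1 H2]]] Hz Hz'.
case: (prod_ex (a ** u, b ** u) q) => z1 Hz1.
apply: frel_trans (prod_scaleL Hz Hz1) _.
rewrite H1 H2 in Hz1.
exact: frel_sym (prod_scaleL Hz' Hz1).
Qed.

Lemma prod_wdR p q q' z z' : frel q q' -> prod_rel p q z -> prod_rel p q' z' -> frel z z'.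
Proof.
case: q q' => c d [c' d'] [u [v [/= H1 H2]]] Hz Hz'.
case: (prod_ex p (c ** u, d ** u)) => z1 Hz1.
apply: frel_trans (prod_scaleR Hz Hz1) _.
rewrite H1 H2 in Hz1.
exact: frel_sym (prod_scaleR Hz' Hz1).
Qed.

Lemma prod_wd p p' q q' z z' : frel p p' -> frel q q' ->
  prod_rel p q z -> prod_rel p' q' z' -> frel z z'.
Proof.
move=> Hp Hq Hz Hz'; case: (prod_ex p' q) => z1 Hz1.
apply: frel_trans (prod_wdL Hp Hz Hz1) (prod_wdR Hq Hz1 Hz').
Qed.

Record Fr := MkFr { frP : S * S -> Prop; frH : exists p, frP = frel p }.

Lemma fr_eq (x y : Fr) : frP x = frP y -> x = y.
Proof.
case: x y => P HP [Q HQ] /= E; subst Q; congr MkFr; exact: proof_irrelevance.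
Qed.

Definition cls (p : S * S) : Fr := @MkFr (frel p) (ex_intro _ p erefl).

Lemma cls_eq p q : frel p q -> cls p = cls q.
Proof.
move=> H; apply: fr_eq => /=; apply: functional_extensionality => r.
apply: propositional_extensionality; split => Hr.
- exact: frel_trans (frel_sym H) Hr.
- exact: frel_trans H Hr.
Qed.

Lemma cls_inj p q : cls p = cls q -> frel p q.
Proof.
move=> E; have : frP (cls q) q by exact: frel_refl.
by rewrite -E.
Qed.

Definition rep (x : Fr) : S * S := proj1_sig (constructive_indefinite_description _ (frH x)).

Lemma cls_rep x : cls (rep x) = x.
Proof.
apply: fr_eq => /=; rewrite /rep.
case: (constructive_indefinite_description _ _) => p Hp /=; by rewrite Hp.
Qed.

Lemma rep_cls p : frel (rep (cls p)) p.
Proof. apply: cls_inj; by rewrite cls_rep. Qed.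

Lemma fr_ind (x : Fr) : exists a b, x = cls (a, b).
Proof. by exists (rep x).1, (rep x).2; rewrite -surjective_pairing cls_rep. Qed.

Definition pmul (p q : S * S) := (p.1 ** ot p.2 q.1, q.2 ** os p.2 q.1).
Lemma pmul_rel p q : prod_rel p q (pmul p q).
Proof. by exists (ot p.2 q.1), (os p.2 q.1); rewrite ore_eq. Qed.

Definition mulF (x y : Fr) : Fr := cls (pmul (rep x) (rep y)).
Definition invF (x : Fr) : Fr := cls ((rep x).2, (rep x).1).
Definition oneF : Fr := cls (e, e).

Lemma mulF_cls p q z : prod_rel p q z -> mulF (cls p) (cls q) = cls z.
Proof.
move=> H; apply: cls_eq; exact: prod_wd (rep_cls p) (rep_cls q) (pmul_rel _ _) H.
Qed.

Lemma invF_cls a b : invF (cls (a, b)) = cls (b, a).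
Proof.
apply: cls_eq; case: (rep_cls (a, b)) => u [v [H1 H2]]; by exists u, v.
Qed.

Lemma mulF_ex a b c d : exists t s, b ** t = c ** s /\ mulF (cls (a, b)) (cls (c, d)) = cls (a ** t, d ** s).
Proof.
exists (ot b c), (os b c); split; first exact: ore_eq.
by apply: mulF_cls; exists (ot b c), (os b c); rewrite ore_eq.
Qed.

Lemma Fr_group : is_group mulF invF oneF.
Proof.
split.
- move=> x y z.
  case: (fr_ind x) => a [b ->]; case: (fr_ind y) => c [d ->]; case: (fr_ind z) => f [g ->].
  case: (mulF_ex a b c d) => t [s [E ->]].
  case: (mulF_ex (a ** t) (d ** s) f g) => t' [s' [E' ->]].
  rewrite (@mulF_cls (c, d) (f, g) (c ** (s ** t'), g ** s')); last first.
    by exists (s ** t'), s'; rewrite mulA E'.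
  apply: mulF_cls; exists (t ** t'), e; split; rewrite /= ?muls1 !mulA ?E //.
- move=> x; case: (fr_ind x) => a [b ->].
  by apply: mulF_cls; exists a, e; split; rewrite /= ?mul1s ?muls1.
- move=> x; case: (fr_ind x) => a [b ->].
  by apply: mulF_cls; exists e, b; split; rewrite /= ?mul1s ?muls1.
- move=> x; case: (fr_ind x) => a [b ->]; rewrite invF_cls.
  rewrite (@mulF_cls (b, a) (a, b) (b, b)); last by exists e, e; split; rewrite /= ?muls1.
  apply: cls_eq; exists e, b; by rewrite /= muls1 mul1s.
- move=> x; case: (fr_ind x) => a [b ->]; rewrite invF_cls.
  rewrite (@mulF_cls (a, b) (b, a) (a, a)); last by exists e, e; split; rewrite /= ?muls1.
  apply: cls_eq; exists e, a; by rewrite /= muls1 mul1s.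
Qed.

Definition hF (s : S) : Fr := cls (s, e).

Lemma hF_mul a b : hF (a ** b) = mulF (hF a) (hF b).
Proof. symmetry; apply: mulF_cls; exists b, e; split; by rewrite /= ?mul1s ?muls1. Qed.

Lemma hF_inj : injective hF.
Proof.
move=> a c /cls_inj [u [v [/= H1 H2]]].
rewrite !mul1s in H2; subst v; exact: rcan H1.
Qed.

Lemma hF_e : hF e = oneF.
Proof. by []. Qed.

Lemma Fr_gen g : exists a b, [/\ (exists s, a = hF s), (exists s, b = hF s) & g = mulF a (invF b)].
Proof.
case: (fr_ind g) => a [b ->]; exists (hF a), (hF b); split; [by exists a | by exists b|].
rewrite /hF invF_cls; symmetry; apply: mulF_cls; exists e, e; split; by rewrite /= ?muls1.
Qed.
End Frac.


Section Embed.
Variables (S : Type) (mul : S -> S -> S) (e : S).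
Hypotheses (mulA : associative mul) (mul1s : left_id e mul) (muls1 : right_id e mul).
Local Infix "**" := mul (at level 40, left associativity).
Hypothesis lcan : forall a c d, a ** c = a ** d -> c = d.
Hypothesis rcan : forall a c d, c ** a = d ** a -> c = d.
Hypothesis J1 : forall a b w, a ** b ** w ** a ** a ** b ** a = b ** a ** w ** a ** a ** a ** b.

Let Hg := Fr_group mulA mul1s muls1 lcan J1.
Let T := fun x : Fr mul => exists s, x = hF mul e s.

Lemma Fr_central k : (forall w, T w -> mulF (mul:=mul) k w = mulF (mul:=mul) w k) ->
  central (mulF (mul:=mul)) k.
Proof.
move=> H y; case: (Fr_gen mulA muls1 lcan J1 y) => a [b [Ta Tb ->]].
rewrite (gA Hg) H // -!(gA Hg); congr mulF.
apply: (commV Hg); exact: H.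
Qed.

Lemma embed2 : embeds_into_nilpotent_group mul 2.
Proof.
exists (Fr mul), (mulF (mul:=mul)), (@invF S mul), (oneF mul e); split.
- exact: Hg.
- apply: (central_nil2 Hg) => x y.
  apply: (@gc_all _ _ _ _ Hg (central (mulF (mul:=mul))) _ _ _ T).
  + done.
  + exact: centralM Hg.
  + exact: centralV Hg.
  + move=> _ _ [a ->] [b ->]; apply: Fr_central => _ [w ->].
    apply: (J1_comm Hg).
    * by rewrite -!(hF_mul mulA mul1s muls1 lcan J1) J1.
    * rewrite -!(hF_mul mulA mul1s muls1 lcan J1); congr hF; have H := J1 a b e; rewrite !muls1 in H; exact H.
  + move=> g; case: (Fr_gen mulA muls1 lcan J1 g) => a [b [Ta Tb E]]; by exists a, b.
- exists (hF mul e); split; first exact: hF_inj mul1s rcan.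
  move=> a b; exact: (hF_mul mulA mul1s muls1 lcan J1 a b).
Qed.
End Embed.

Lemma comm_J1 (S : Type) (mul : S -> S -> S) (mulA : associative mul)
  (mC : commutative mul) : forall a b w, mul (mul (mul (mul (mul (mul a b) w) a) a) b) a =
    mul (mul (mul (mul (mul (mul b a) w) a) a) a) b.
Proof.
move=> a b w; rewrite -!mulA (mC b a).
by rewrite mulA (mC a b) -mulA.
Qed.

Section Embed1.
Variables (S : Type) (mul : S -> S -> S) (e : S).
Hypotheses (mulA : associative mul) (mul1s : left_id e mul) (muls1 : right_id e mul).
Hypothesis lcan : forall a c d, mul a c = mul a d -> c = d.
Hypothesis rcan : forall a c d, mul c a = mul d a -> c = d.
Hypothesis mC : commutative mul.

Let J1 := comm_J1 mulA mC.
Let Hg := Fr_group mulA mul1s muls1 lcan J1.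

Lemma embed1 : embeds_into_nilpotent_group mul 1.
Proof.
exists (Fr mul), (mulF (mul:=mul)), (@invF S mul), (oneF mul e); split.
- exact: Hg.
- apply: (comm_nil1 Hg) => x y.
  apply: (@gc_all _ _ _ _ Hg (fun z => z = oneF mul e) _ _ _ (fun x => exists s, x = hF mul e s)).
  + move=> z ->; exact: central1 Hg.
  + by move=> u v -> ->; rewrite (g1m Hg).
  + by move=> u ->; rewrite (ginv1 Hg).
  + move=> _ _ [a ->] [b ->]; apply: (gc_comm1 Hg).
    by rewrite -!(hF_mul mulA mul1s muls1 lcan J1) mC.
  + move=> g; case: (Fr_gen mulA muls1 lcan J1 g) => a [b [Ta Tb E]]; by exists a, b.
- exists (hF mul e); split; first exact: hF_inj mul1s rcan.
  move=> a b; exact: (hF_mul mulA mul1s muls1 lcan J1 a b).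
Qed.
End Embed1.


Section Side.
Variables (S : Type) (mul : S -> S -> S).
Variables (G : Type) (gmul : G -> G -> G) (ginv : G -> G) (ge : G).
Hypothesis Hg : is_group gmul ginv ge.
Variable h : S -> G.
Hypothesis hinj : injective h.
Hypothesis hmul : forall a b, h (mul a b) = gmul (h a) (h b).
Local Infix "*" := gmul.
Local Notation "x ^-1" := (ginv x).
Local Notation cen := (central gmul).
Local Notation gA := (gA Hg).

Lemma cen_swap z x y : cen z -> x * (z * y) = z * (x * y).
Proof. by move=> Hz; rewrite gA -Hz -gA. Qed.

Lemma pert_i1 (alpha : 'I_2 -> S -> S -> Prop) :
  (forall c d, alpha i1 c d -> cen ((h c)^-1 * h d)) ->
  forall f, Mgen mul alpha f -> exists z, cen z /\
    forall b0, h (f (P2 b0 true)) = h (f (P2 b0 false)) * z.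
Proof.
move=> Hc f; elim=> [i a b Hab | f1 g1 _ [zf [Cf Ef]] _ [zg [Cg Eg]]].
- case: (I2_cases i) => Ei; subst i.
  + exists ge; split; first exact: central1 Hg.
    by move=> b0; rewrite /= !P2_0 (gm1 Hg).
  + exists ((h a)^-1 * h b); split; first exact: Hc.
    by move=> b0; rewrite /= !P2_1 (gVK Hg).
- exists (zf * zg); split; first exact: (centralM Hg).
  move=> b0; rewrite !hmul Ef Eg -!gA; congr gmul; symmetry; exact: cen_swap.
Qed.

Lemma pert_i0 (alpha : 'I_2 -> S -> S -> Prop) :
  (forall c d, alpha i0 c d -> cen ((h c)^-1 * h d)) ->
  forall f, Mgen mul alpha f -> exists z, cen z /\
    forall b1, h (f (P2 true b1)) = h (f (P2 false b1)) * z.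
Proof.
move=> Hc f; elim=> [i a b Hab | f1 g1 _ [zf [Cf Ef]] _ [zg [Cg Eg]]].
- case: (I2_cases i) => Ei; subst i.
  + exists ((h a)^-1 * h b); split; first exact: Hc.
    by move=> b1; rewrite /= !P2_0 (gVK Hg).
  + exists ge; split; first exact: central1 Hg.
    by move=> b1; rewrite /= !P2_1 (gm1 Hg).
- exists (zf * zg); split; first exact: (centralM Hg).
  move=> b1; rewrite !hmul Ef Eg -!gA; congr gmul; symmetry; exact: cen_swap.
Qed.

Lemma z_one x z : x = x * z -> z = ge.
Proof. by move=> H; apply: (gcanl Hg (x := x)); rewrite -H (gm1 Hg). Qed.

Lemma tc_i1 (alpha : 'I_2 -> S -> S -> Prop) :
  (forall c d, alpha i1 c d -> cen ((h c)^-1 * h d)) -> term_cond mul alpha (@eq S).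
Proof.
move=> Hc; apply: bin_tc_intro => f Mf E.
case: (pert_i1 Hc Mf) => z [Cz Ez].
have z1 : z = ge by apply: (@z_one (h (f (P2 false false)))); rewrite -Ez E.
by apply: hinj; rewrite Ez z1 (gm1 Hg).
Qed.

Lemma tc_i0 (alpha : 'I_2 -> S -> S -> Prop) :
  (forall c d, alpha i0 c d -> cen ((h c)^-1 * h d)) -> term_cond mul alpha (@eq S).
Proof.
move=> Hc; apply: bin_tc_intro => f Mf E.
case: (pert_i0 Hc Mf) => z [Cz Ez].
by apply: hinj; rewrite !Ez E.
Qed.

Definition theta (c d : S) := cen ((h c)^-1 * h d).

Lemma theta_congr : is_congr mul theta.
Proof.
split.
- by move=> a; rewrite /theta (gVm Hg); exact: central1 Hg.
- move=> a b; rewrite /theta => H.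
  have -> : (h b)^-1 * h a = ((h a)^-1 * h b)^-1 by rewrite (ginvM Hg) (ginvK Hg).
  exact: (centralV Hg).
- move=> a b c; rewrite /theta => H1 H2.
  have -> : (h a)^-1 * h c = ((h a)^-1 * h b) * ((h b)^-1 * h c).
    by rewrite -gA (gVK Hg).
  exact: (centralM Hg).
- move=> a b c d; rewrite /theta !hmul => H1 H2.
  have -> : (h a * h c)^-1 * (h b * h d) = ((h a)^-1 * h b) * ((h c)^-1 * h d).
    by rewrite (ginvM Hg) -!gA (gA (h a)^-1 (h b) (h d)) (gA (h a)^-1 (h b)) (cen_swap _ _ H1).
  exact: (centralM Hg).
Qed.

Hypothesis H2 : forall x y, cen (gc gmul ginv x y).

Lemma prod_step F0 F1 G0 G1 vf vg df dg : cen vf -> cen vg ->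
  F1 = F0 * (vf * df) -> G1 = G0 * (vg * dg) ->
  F1 * G1 = F0 * G0 * ((vf * (gc gmul ginv df G0 * vg)) * (df * dg)).
Proof.
move=> Cf Cg -> ->.
have E : forall X, vf * (df * (G0 * X)) = G0 * (vf * (df * (gc gmul ginv df G0 * X))).
  move=> X; rewrite !gA (gc_swap Hg (vf * df) G0) (gc_centr_l Hg) // -!gA //.
rewrite -!gA; congr gmul.
rewrite E; congr gmul; congr gmul.
rewrite (cen_swap _ _ (H2 _ _)); congr gmul; exact: cen_swap.
Qed.

Lemma theta_inv (alpha : 'I_2 -> S -> S -> Prop) f : Mgen mul alpha f ->
  exists d, forall b0, exists v, cen v /\
    h (f (P2 b0 true)) = h (f (P2 b0 false)) * (v * d).
Proof.
elim=> [i a b Hab | f1 g1 _ [df Ef] _ [dg Eg]].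
- case: (I2_cases i) => Ei; subst i.
  + exists ge => b0; exists ge; split; first exact: central1 Hg.
    by rewrite /= !P2_0 !(gm1 Hg).
  + exists ((h a)^-1 * h b) => b0; exists ge; split; first exact: central1 Hg.
    by rewrite /= !P2_1 (g1m Hg) (gVK Hg).
- exists (df * dg) => b0.
  case: (Ef b0) => vf [Cf Hf]; case: (Eg b0) => vg [Cg Hg'].
  exists (vf * (gc gmul ginv df (h (g1 (P2 b0 false))) * vg)); split.
    apply: (centralM Hg) => //; apply: (centralM Hg) => //.
  by rewrite /= !hmul; apply: prod_step.
Qed.

Lemma theta_tc (alpha : 'I_2 -> S -> S -> Prop) : term_cond mul alpha theta.
Proof.
apply: bin_tc_intro => f Mf.
case: (theta_inv Mf) => d Ed.
case: (Ed false) => v0 [C0 E0]; case: (Ed true) => v1 [C1 E1].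
rewrite /theta E0 E1 !(gKV Hg) => H.
have Cd : cen d.
  have -> : d = v0^-1 * (v0 * d) by rewrite (gKV Hg).
  apply: (centralM Hg) => //; exact: (centralV Hg).
exact: (centralM Hg).
Qed.

Definition aff (v : bool -> bool -> G) := v true true * v false false = v true false * v false true.

Lemma swap_mid a b c d : cen b -> a * b * (c * d) = a * c * (b * d).
Proof. by move=> Hb; rewrite -!gA; congr gmul; symmetry; apply: cen_swap. Qed.

Lemma swap_mid2 a b c d : cen c -> a * b * (c * d) = a * c * (b * d).
Proof. by move=> Hc; rewrite -!gA; congr gmul; apply: cen_swap. Qed.

Lemma aff_mul v w : (forall a b, cen (v a b)) -> (forall a b, cen (w a b)) -> aff v -> aff w ->
  aff (fun a b => v a b * w a b).
Proof.
move=> Cv Cw Av Aw; rewrite /aff.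
by rewrite swap_mid // Av Aw -swap_mid.
Qed.

Lemma caff k f (alpha : 'I_3 -> S -> S -> Prop) : Mgen mul alpha f ->
  aff (fun a b => gc gmul ginv k (h (f (Q3 a b false)))).
Proof.
elim=> [i a b Hab | f1 g1 _ A1 _ A2].
- rewrite /aff /=; case: (I3_cases i) => Ei; subst i.
  + by rewrite !Q3_0.
  + by rewrite !Q3_1 H2.
  + by rewrite !Q3_2.
- have := aff_mul (fun a b => H2 _ _) (fun a b => H2 _ _) A1 A2.
  by rewrite /aff /= !hmul !(gcM_r Hg H2).
Qed.

Lemma tern_inv (alpha : 'I_3 -> S -> S -> Prop) f : Mgen mul alpha f ->
  exists d (v : bool -> bool -> G), [/\ forall a b, cen (v a b), aff v &
    forall a b, h (f (Q3 a b true)) = h (f (Q3 a b false)) * (v a b * d)].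
Proof.
have C1 := central1 Hg.
elim=> [i a b Hab | f1 g1 Mf1 [df [vf [Cf Af Ef]]] Mg1 [dg [vg [Cg Ag Eg]]]].
- case: (I3_cases i) => Ei; subst i.
  + exists ge, (fun _ _ => ge); split; [by move=> *; exact: C1 | by [] | move=> a0 b0].
    by rewrite /= !Q3_0 !(gm1 Hg).
  + exists ge, (fun _ _ => ge); split; [by move=> *; exact: C1 | by [] | move=> a0 b0].
    by rewrite /= !Q3_1 !(gm1 Hg).
  + exists ((h a)^-1 * h b), (fun _ _ => ge); split; [by move=> *; exact: C1 | by [] | move=> a0 b0].
    by rewrite /= !Q3_2 (g1m Hg) (gVK Hg).
- exists (df * dg), (fun a0 b0 => vf a0 b0 * (gc gmul ginv df (h (g1 (Q3 a0 b0 false))) * vg a0 b0)).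
  split.
  + move=> a0 b0; apply: (centralM Hg) => //; exact: (centralM Hg).
  + apply: aff_mul => //; try (by move=> ? ?; apply: (centralM Hg)).
    apply: aff_mul => //; try (by move=> ? ?; exact: H2).
    apply: caff; exact: Mg1.
  + by move=> a0 b0; rewrite /= !hmul; apply: prod_step.
Qed.

Lemma tern_tc (alpha : 'I_3 -> S -> S -> Prop) : term_cond mul alpha (@eq S).
Proof.
apply: tern_tc_intro => f Mf E00 E10 E01.
case: (tern_inv Mf) => d [v [Cv Av Ev]].
have K00 : v false false * d = ge by apply: (@z_one (h (f (Q3 false false false)))); rewrite -Ev E00.
have K10 : v true false * d = ge by apply: (@z_one (h (f (Q3 true false false)))); rewrite -Ev E10.
have K01 : v false true * d = ge by apply: (@z_one (h (f (Q3 false true false)))); rewrite -Ev E01.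
have K11 : v true true * d = ge.
  by rewrite -(gm1 Hg (_ * d)) -K00 swap_mid2 // Av -swap_mid2 // K10 K01 (g1m Hg).
by apply: hinj; rewrite Ev K11 (gm1 Hg).
Qed.
End Side.


Section Main.
Variables (S : Type) (mul : S -> S -> S) (e : S).
Hypotheses (mulA : associative mul) (mul1s : left_id e mul) (muls1 : right_id e mul).

Lemma case0 : (supernilpotent mul 0 <-> (left_nilpotent mul 0 /\ right_nilpotent mul 0)) /\
  ((left_nilpotent mul 0 /\ right_nilpotent mul 0) <-> embeds_into_nilpotent_group mul 0).
Proof.
have L : left_nilpotent mul 0 <-> forall a b : S, a = b.
  by split => [H a b | H a b _]; [apply: H | apply: H].
have R : right_nilpotent mul 0 <-> forall a b : S, a = b.
  by split => [H a b | H a b _]; [apply: H | apply: H].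
have Su : supernilpotent mul 0 <-> forall a b : S, a = b.
  split => [H a b | H a b _]; last exact: H.
  apply: H => d Hd Ht.
  have M : Mgen mul (fun _ : 'I_1 => (@total_rel S)) (fun x : 'I_1 -> bool => if x ord_max then b else a).
    by apply: Mgen_gen.
  have := Ht _ M.
  rewrite !ext_pt_max; apply => x Hx; exfalso; apply: Hx; by case.
have Em : embeds_into_nilpotent_group mul 0 <-> forall a b : S, a = b.
  split.
  - move=> [G [gmul [ginv [ge [Hg Hn [h [hinj hm]]]]]]] a b; apply: hinj.
    by rewrite (Hn (h a) I) (Hn (h b) I).
  - move=> H; exists unit, (fun _ _ => tt), (fun _ => tt), tt; split.
    + by split => //; case.
    + by case.
    + exists (fun _ => tt); split => // x y _; exact: H.
tauto.
Qed.

Lemma if_tot (i : 'I_2) a b : (if val i == 0 then (@total_rel S) else (@total_rel S)) a b <-> (@total_rel S) a b.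
Proof. by case: ifP. Qed.

Lemma case1 : (supernilpotent mul 1 <-> (left_nilpotent mul 1 /\ right_nilpotent mul 1)) /\
  ((left_nilpotent mul 1 /\ right_nilpotent mul 1) <-> embeds_into_nilpotent_group mul 1).
Proof.
pose T1 := term_cond mul (fun _ : 'I_2 => (@total_rel S)) (@eq S).
have Su : supernilpotent mul 1 <-> T1 by exact: triv_tc.
have L : left_nilpotent mul 1 <-> T1.
  rewrite /left_nilpotent /= /comm2 triv_tc; split; apply: tc_ext => i a b.
  - by case: ifP => _; split.
  - by case: ifP => _; split.
have R : right_nilpotent mul 1 <-> T1.
  rewrite /right_nilpotent /= /comm2 triv_tc; split; apply: tc_ext => i a b.
  - by case: ifP => _; split.
  - by case: ifP => _; split.
have Em : embeds_into_nilpotent_group mul 1 <-> T1.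
  split.
  - move=> [G [gmul [ginv [ge [Hg Hn [h [hinj hm]]]]]]].
    apply: (tc_i1 Hg hinj hm) => c d _ y; exact: nil1_comm Hg Hn _ _.
  - move=> T; apply: embed1 mulA mul1s muls1 _ _ _.
    + exact: T1_lcancel T.
    + exact: T1_rcancel T.
    + exact: T1_comm T.
tauto.
Qed.

Lemma case2 : (supernilpotent mul 2 <-> (left_nilpotent mul 2 /\ right_nilpotent mul 2)) /\
  ((left_nilpotent mul 2 /\ right_nilpotent mul 2) <-> embeds_into_nilpotent_group mul 2).
Proof.
pose T3 := term_cond mul (fun _ : 'I_3 => (@total_rel S)) (@eq S).
pose TL := term_cond mul (fun i : 'I_2 => if val i == 0 then (@total_rel S) else gam mul) (@eq S).
pose TR := term_cond mul (fun i : 'I_2 => if val i == 0 then gam mul else (@total_rel S)) (@eq S).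
have Su : supernilpotent mul 2 <-> T3 by exact: triv_tc.
have L : left_nilpotent mul 2 <-> TL by exact: triv_tc.
have R : right_nilpotent mul 2 <-> TR by exact: triv_tc.
have E1 : T3 -> embeds_into_nilpotent_group mul 2.
  move=> T; apply: embed2 mulA mul1s muls1 _ _ _.
  + exact: T3_lcancel T.
  + exact: T3_rcancel T.
  + exact: T3_J1 T.
have E2 : TL -> TR -> embeds_into_nilpotent_group mul 2.
  move=> HL HR; apply: embed2 mulA mul1s muls1 _ _ _.
  + exact: TL_lcancel HL.
  + exact: TL_rcancel HL.
  + exact: TR_J1 HL HR.
have E3 : embeds_into_nilpotent_group mul 2 -> [/\ T3, TL & TR].
  move=> [G [gmul [ginv [ge [Hg Hn [h [hinj hm]]]]]]].
  have H2 := nil2_central Hg Hn.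
  have Hth : forall c d, gam mul c d -> theta gmul ginv h c d.
    move=> c d Hcd. have X1 := theta_congr Hg hm. have X2 := @theta_tc _ _ _ _ _ _ Hg h hm H2 (fun i : 'I_2 => if val i == 0 then @total_rel S else @total_rel S). exact: (comm_min X1 X2 Hcd).
  split.
  - rewrite /T3. have X3 := tern_tc Hg hinj hm H2. exact: X3.
  - rewrite /TL; apply: (tc_i1 Hg hinj hm) => c d; exact: Hth.
  - rewrite /TR; apply: (tc_i0 Hg hinj hm) => c d; exact: Hth.
split.
- rewrite Su L R; split.
  + by move/E1/E3 => [].
  + by case=> HL HR; case: (E3 (E2 HL HR)).
- rewrite L R; split.
  + by case.
  + by case/E3.
Qed.
End Main.


Theorem theorem4p6 (S : Type) (mul : S -> S -> S) (e : S)
    (mulA : associative mul) (mul1s : left_id e mul) (muls1 : right_id e mul)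
    (n : nat) (hn : n <= 2) :
  (supernilpotent mul n <-> (left_nilpotent mul n /\ right_nilpotent mul n)) /\
  ((left_nilpotent mul n /\ right_nilpotent mul n) <->
     embeds_into_nilpotent_group mul n).
Proof.
case: n hn => [|[|[|n]]] hn //.
- exact: case0.
- exact: case1 mulA mul1s muls1.
- exact: case2 mulA mul1s muls1.
Qed.
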